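(* Let $(X,\mathcal{M})$ be a measurable space, $\Sigma$ a compact Hausdorff group with Haar probability measure $\mu_\Sigma$, and $T:\Sigma\times X\to X$ a measurable group action. Let $n\in\mathbb{Z}^+$, $V\subset\mathcal{M}_b(X)^n$ a linear subspace equipped with the $M(X)$-topology, and $\Gamma\subset V$. If $\Gamma$ is convex and closed, $S_\Sigma[V]\subset V$, and $\Gamma$ is closed under $\Sigma$ (i.e. $\gamma\circ T_\sigma\in\Gamma$ for all $\gamma\in\Gamma$, $\sigma\in\Sigma$), then $S_\Sigma[\Gamma]\subset\Gamma$.
   Context: $S_\Sigma[\gamma](x)=\int_\Sigma\gamma(T_\sigma(x))\mu_\Sigma(d\sigma)$, applied componentwise. $M(X)$-topology: with $M(X)$ the finite signed measures on $X$, for $\nu\in M(X)^n$ let $\tau_\nu(\gamma)=\sum_{i=1}^n\int\gamma^i d\nu_i$; $V$ carries the weakest topology making all $\tau_\nu$ continuous (a locally convex topology with dual $\{\tau_\nu\}$). *)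

(* Defs.v *)
From HB Require Import structures.
From mathcomp Require Import all_boot all_order all_algebra.
From mathcomp Require Import all_classical all_reals all_analysis.
Set Implicit Arguments. Unset Strict Implicit. Unset Printing Implicit Defensive.
Import Order.TTheory GRing.Theory Num.Theory.
Local Open Scope classical_set_scope.
Local Open Scope ring_scope.

Definition BorelT (S : ptopologicalType) := g_sigma_algebraType (@open S).

Section Defs.
Context {R : realType}.

Definition is_group {S : Type} (mul : S -> S -> S) (inv : S -> S) (e : S) :=
  [/\ (forall a b c, mul a (mul b c) = mul (mul a b) c),
      (forall a, mul e a = a) &
      (forall a, mul (inv a) a = e)].

Definition compact_hausdorff_group (S : ptopologicalType)
    (mul : S -> S -> S) (inv : S -> S) (e : S) :=
  [/\ is_group mul inv e,
      continuous (fun p : S * S => mul p.1 p.2),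
      continuous inv,
      compact [set: S] & hausdorff_space S].

Definition haar_probability (S : ptopologicalType) (mul : S -> S -> S)
    (mu : probability (BorelT S) R) :=
  (forall (g : S) (A : set (BorelT S)), measurable A ->
      mu [set mul g a | a in A] = mu A) /\
  (forall A : set (BorelT S), measurable A ->
      mu A = ereal_sup [set mu K | K in [set K : set S | compact K /\ K `<=` A]]).

Definition measurable_group_action (S : ptopologicalType) (mul : S -> S -> S)
    (e : S) {d} (X : measurableType d) (T : S -> X -> X) :=
  [/\ measurable_fun [set: (BorelT S * X)%type] (fun p : BorelT S * X => T p.1 p.2),
      (forall x, T e x = x) &
      (forall g h x, T (mul g h) x = T g (T h x))].

Definition Mb {d} (X : measurableType d) (n : nat) : set ('I_n -> X -> R) :=
  [set g : 'I_n -> X -> R | forall i, measurable_fun [set: X] (g i) /\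
                     exists M : R, forall x, `|g i x| <= M].

Definition linear_subspace {d} (X : measurableType d) (n : nat)
    (V : set ('I_n -> X -> R)) :=
  [/\ V `<=` @Mb _ X n, V (fun _ _ => 0) &
      (forall (a : R) g h, V g -> V h -> V (fun i x => a * g i x + h i x))].

(* A finite signed measure on X, represented (Jordan decomposition) as the
   difference nu.1 - nu.2 of two finite (positive) measures. *)
Definition fsmeasure {d} (X : measurableType d) :=
  ({finite_measure set X -> \bar R} * {finite_measure set X -> \bar R})%type.

Definition tau {d} {X : measurableType d} {n : nat}
    (nu : 'I_n -> fsmeasure X) (g : 'I_n -> X -> R) : R :=
  \sum_(i < n) (Rintegral (nu i).1 [set: X] (g i) - Rintegral (nu i).2 [set: X] (g i)).

(* Gamma is closed in V for the M(X)-topology (the weakest topology on V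
   making all tau_nu continuous): V \ Gamma is open, i.e. every point of
   V \ Gamma has a basic weak neighbourhood (finitely many tau's) in V \ Gamma. *)
Definition MX_closed {d} {X : measurableType d} {n : nat}
    (V Gam : set ('I_n -> X -> R)) :=
  forall g, V g -> ~ Gam g ->
    exists (k : nat) (nus : 'I_k -> 'I_n -> fsmeasure X) (eps : R), 0 < eps /\
      forall h, V h -> (forall j, `|tau (nus j) h - tau (nus j) g| < eps) -> ~ Gam h.

Definition is_convex {d} {X : measurableType d} {n : nat}
    (Gam : set ('I_n -> X -> R)) :=
  forall g h (t : R), Gam g -> Gam h -> 0 <= t <= 1 ->
    Gam (fun i x => t * g i x + (1 - t) * h i x).

Definition S_Sigma (S : ptopologicalType) (mu : probability (BorelT S) R)
    {d} {X : measurableType d} (T : S -> X -> X) {n : nat}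
    (g : 'I_n -> X -> R) : 'I_n -> X -> R :=
  fun i x => Rintegral mu [set: BorelT S] (fun s : BorelT S => g i (T s x)).

End Defs.

(* Main.v *)
Require Import Defs.
From HB Require Import structures.
From mathcomp Require Import all_boot all_order all_algebra.
From mathcomp Require Import all_classical all_reals all_analysis.
From mathcomp Require Import measurable_realfun.
From mathcomp Require Import lra.
Import Order.TTheory GRing.Theory Num.Theory.
Local Open Scope classical_set_scope.
Local Open Scope ring_scope.

Section Helpers.
Context {R : realType}.

Definition bm {d} {T : measurableType d} (f : T -> R) :=
  measurable_fun setT f /\ exists M : R, forall x, `|f x| <= M.

Lemma bm_int_gen {d} {T : measurableType d} (m : {measure set T -> \bar R}) (f : T -> R) :
  (m setT < +oo)%E -> bm f -> m.-integrable setT (EFin \o f).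
Proof.
move=> mfin [mf [M hM]]; apply/integrableP; split; first exact/measurable_EFinP.
apply: (@le_lt_trans _ _ (`|M|%:E * m setT)%E).
  apply: integral_le_bound => //; first exact/measurable_EFinP.
  by apply: aeW => x _ /=; rewrite lee_fin (le_trans (hM x)) // ler_norm.
rewrite lte_mul_pinfty //.
Qed.

Lemma bm_int {d} {T : measurableType d} (m : {finite_measure set T -> \bar R}) (f : T -> R) :
  bm f -> m.-integrable setT (EFin \o f).
Proof.
apply: bm_int_gen.
have := fin_num_measure m setT measurableT.
by rewrite ge0_fin_numE.
Qed.

Lemma bm_cst {d} {T : measurableType d} (c : R) : bm (fun _ : T => c).
Proof. by split; [exact: measurable_cst | exists `|c|]. Qed.

Lemma bmD {d} {T : measurableType d} {f g : T -> R} : bm f -> bm g -> bm (fun x => f x + g x).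
Proof.
move=> [mf [M hM]] [mg [N hN]]; split; first exact: measurable_realfun.measurable_funD.
exists (M + N) => x; apply: (le_trans (ler_normD _ _)); exact: lerD.
Qed.

Lemma bmM {d} {T : measurableType d} {f g : T -> R} : bm f -> bm g -> bm (fun x => f x * g x).
Proof.
move=> [mf [M hM]] [mg [N hN]]; split; first exact: measurable_realfun.measurable_funM.
exists (M * N) => x; rewrite normrM; apply: ler_pM => //.
Qed.

Lemma bmZ {d} {T : measurableType d} (c : R) {f : T -> R} : bm f -> bm (fun x => c * f x).
Proof. by move=> hf; apply: bmM => //; exact: bm_cst. Qed.

Lemma bmB {d} {T : measurableType d} {f g : T -> R} : bm f -> bm g -> bm (fun x => f x - g x).
Proof.
move=> hf hg; have := bmD hf (bmZ (-1) hg).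
by congr bm; apply/funext => x; rewrite mulN1r.
Qed.

Lemma bm_norm {d} {T : measurableType d} {f : T -> R} : bm f -> bm (fun x => `|f x|).
Proof.
move=> [mf [M hM]]; split; last by exists M => x; rewrite normr_id.
exact: (measurableT_comp (@measurable_realfun.normr_measurable R setT) mf).
Qed.

Lemma bm_sum {d} {T : measurableType d} (I : Type) (r : seq I) (h : I -> T -> R) :
  (forall i, bm (h i)) -> bm (fun x => \sum_(i <- r) h i x).
Proof.
move=> hh; elim: r => [|a r IH].
  by have := @bm_cst _ T 0; congr bm; apply/funext => x; rewrite big_nil.
by have := bmD (hh a) IH; congr bm; apply/funext => x; rewrite big_cons.
Qed.

Lemma bm_indic {d} {T : measurableType d} (A : set T) : measurable A -> bm (\1_A : T -> R).
Proof.
move=> mA; split; first exact: measurable_indic.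
by exists 1 => x; rewrite indicE; case: (_ \in _); rewrite ?normr1 ?normr0.
Qed.

Lemma Rintegral_sum {d} {T : measurableType d} (m : {finite_measure set T -> \bar R})
  (I : Type) (r : seq I) (h : I -> T -> R) :
  (forall i, bm (h i)) ->
  \int[m]_x (\sum_(i <- r) h i x) = \sum_(i <- r) \int[m]_x h i x.
Proof.
move=> hh; elim: r => [|a r IH].
  rewrite big_nil (@eq_Rintegral _ _ _ _ _ (fun _ => 0)); last by move=> x _; rewrite big_nil.
  by rewrite Rintegral_cst // mul0r.
rewrite big_cons -IH -RintegralD //; last 2 first.
- exact: bm_int.
- exact/bm_int/bm_sum.
by apply: eq_Rintegral => x _; rewrite big_cons.
Qed.


Lemma bm_partial {d1 d2} {T1 : measurableType d1} {T2 : measurableType d2}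
  (m1 : {finite_measure set T1 -> \bar R}) (m2 : {finite_measure set T2 -> \bar R})
  (f : T1 * T2 -> R) : bm f -> bm (fun x => \int[m2]_y f (x, y)).
Proof.
move=> [mf [M hM]].
have hsec : forall x, bm (fun y => f (x, y)).
  by move=> x; split; [exact: measurable_fun_pair2 | exists M].
have prodfin : ((m1 \x m2)%E setT < +oo)%E.
  rewrite -setXTT product_measure1E //.
  apply: lte_mul_pinfty => //.
  - exact: fin_num_measure.
  - by rewrite -ge0_fin_numE // fin_num_measure.
have hint : (m1 \x m2)%E.-integrable setT (EFin \o f).
  by apply: bm_int_gen => //; split => //; exists M.
split.
  have := measurable_fubini_F hint.
  move=> mF; apply: (eq_measurable_fun (fine \o fubini_F m2 (EFin \o f))).
    by move=> x _.
  exact: measurableT_comp mF.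
exists (M * fine (m2 setT)) => x.
apply: (le_trans (le_normr_Rintegral _ _)) => //; first exact/bm_int/hsec.
rewrite -Rintegral_cst //; apply: le_Rintegral => //.
- exact/bm_int/bm_norm/hsec.
- exact/bm_int/bm_cst.
Qed.

Lemma fubiniR {d1 d2} {T1 : measurableType d1} {T2 : measurableType d2}
  (m1 : {finite_measure set T1 -> \bar R}) (m2 : {finite_measure set T2 -> \bar R})
  (f : T1 * T2 -> R) : bm f ->
  \int[m1]_x \int[m2]_y f (x, y) = \int[m2]_y \int[m1]_x f (x, y).
Proof.
move=> [mf [M hM]].
have hsec2 : forall x, bm (fun y => f (x, y)).
  by move=> x; split; [exact: measurable_fun_pair2 | exists M].
have hsec1 : forall y, bm (fun x => f (x, y)).
  by move=> y; split; [exact: measurable_fun_pair1 | exists M].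
have prodfin : ((m1 \x m2)%E setT < +oo)%E.
  rewrite -setXTT product_measure1E //.
  apply: lte_mul_pinfty => //.
  - exact: fin_num_measure.
  - by rewrite -ge0_fin_numE // fin_num_measure.
have hint : (m1 \x m2)%E.-integrable setT (EFin \o f).
  by apply: bm_int_gen => //; split => //; exists M.
have := Fubini hint => /= HF.
rewrite /Rintegral.
transitivity (fine (\int[m1]_x (\int[m2]_y (f (x, y))%:E))%E).
  congr fine; apply: eq_integral => x _; rewrite fineK //.
  by apply: integrable_fin_num => //; exact: (bm_int m2 _ (hsec2 x)).
rewrite HF.
congr fine; apply: eq_integral => y _; rewrite fineK //.
by apply: integrable_fin_num => //; exact: (bm_int m1 _ (hsec1 y)).
Qed.


Lemma sum0_aux (I : Type) (r : seq I) (w : I -> R) (c : I -> R) :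
  (forall a, 0 <= w a) -> \sum_(b <- r) w b = 0 -> \sum_(b <- r) w b * c b = 0.
Proof.
move=> w0; elim: r => [|a r IH]; first by rewrite !big_nil.
rewrite !big_cons => /eqP; rewrite paddr_eq0 //; last exact: sumr_ge0.
by case/andP => /eqP -> /eqP /IH ->; rewrite mul0r addr0.
Qed.

Lemma conv_seq {d} {X : measurableType d} {n : nat} (Gam : set ('I_n -> X -> R))
  (I : Type) (r : seq I) (w : I -> R) (G : I -> 'I_n -> X -> R) :
  is_convex Gam -> (forall a, 0 <= w a) -> \sum_(a <- r) w a = 1 ->
  (forall a, Gam (G a)) -> Gam (fun i x => \sum_(a <- r) w a * G a i x).
Proof.
move=> hconv w0; elim: r w w0 => [|a r IH] w w0.
  by rewrite big_nil => /eqP; rewrite eq_sym oner_eq0.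
rewrite big_cons => hsum hG.
set W := \sum_(b <- r) w b.
have W0 : 0 <= W by apply: sumr_ge0.
have [Weq|Wne] := eqVneq W 0.
  have wa1 : w a = 1 by move: hsum; rewrite -/W Weq addr0.
  have -> : (fun i x => \sum_(b <- a :: r) w b * G b i x) = G a.
    apply/funext => i; apply/funext => x; rewrite big_cons wa1 mul1r.
    by rewrite (sum0_aux _ _ _ _ w0 Weq) addr0.
  exact: hG.
have Wpos : 0 < W by rewrite lt_def Wne W0.
have hIH := IH (fun b => w b / W) (fun b => divr_ge0 (w0 b) W0).
have := hIH _ hG.
have s1 : \sum_(b <- r) w b / W = 1.
  by rewrite -mulr_suml -/W divff.
move=> /(_ s1) HG.
have ha : 0 <= w a <= 1.
  by rewrite w0 /=; move: hsum; rewrite -/W => <-; rewrite lerDl.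
have := hconv _ _ (w a) (hG a) HG ha.
have -> : 1 - w a = W by rewrite -hsum addrAC subrr add0r.
congr Gam; apply/funext => i; apply/funext => x.
rewrite big_cons mulr_sumr; congr (_ + _); apply: eq_bigr => b _.
by rewrite mulrA mulrCA divff ?mulr1.
Qed.


Lemma approx {d} {T : measurableType d} (m : probability T R) (pt : T) (k : nat)
  (F : 'I_k -> T -> R) (del : R) :
  0 < del -> (forall j, bm (F j)) ->
  exists (K : finType) (w : K -> R) (sp : K -> T),
  [/\ forall c, 0 <= w c, \sum_(c : K) w c = 1 &
      forall j, `|\sum_(c : K) w c * F j (sp c) - \int[m]_x F j x| <= del].
Proof.
move=> del0 hF.
have [Mf hMf] : {Mf : 'I_k -> R & forall j x, `|F j x| <= Mf j}.
  by apply: (@choice _ _ (fun j M => forall x, `|F j x| <= M)) => j; exact: (hF j).2.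
pose M := \sum_(j < k) `|Mf j|.
have M0 : 0 <= M by apply: sumr_ge0.
have hM : forall j x, `|F j x| <= M.
  move=> j x; apply: (le_trans (hMf j x)); apply: (le_trans (ler_norm _)).
  by rewrite /M (bigD1 j) //= lerDl sumr_ge0.
pose N := (Num.trunc (2 * M / del)).+1.
pose K := {ffun 'I_k -> 'I_N}.
pose lo (c : K) (j : 'I_k) : R := (c j)%:R * del - M.
pose A (c : K) : set T :=
  \bigcap_(j in [set: 'I_k]) ([set: T] `&` F j @^-1` `[lo c j, lo c j + del[).
have AP : forall c x, A c x <-> forall j, lo c j <= F j x < lo c j + del.
  move=> c x; split.
    by move=> H j; have [_ /=] := H j I; rewrite in_itv.
  by move=> H j _; split => //=; rewrite in_itv /= H.
have mA : forall c, measurable (A c).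
  move=> c; rewrite /A; apply: fin_bigcap_measurable; first exact: finite_finset.
  by move=> j _; apply: (hF j).1 => //; exact: measurable_itv.
pose v (j : 'I_k) (x : T) : R := (F j x + M) / del.
have hv : forall j x, v j x * del = F j x + M.
  by move=> j x; rewrite /v divfK // gt_eqF.
have hFM : forall j x, - M <= F j x <= M.
  by move=> j x; rewrite -ler_norml hM.
have v0 : forall j x, 0 <= v j x.
  move=> j x; apply: divr_ge0; last exact: ltW.
  by have := hFM j x; lra.
have vN : forall j x, (Num.trunc (v j x) < N)%N.
  move=> j x; rewrite ltnS; apply: le_truncn.
  rewrite /v ler_wpM2r // ?invr_ge0 ?(ltW del0) //.
  by have := hFM j x; lra.
pose key (x : T) : K := [ffun j => inord (Num.trunc (v j x))].
have keyP : forall x, A (key x) x.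
  move=> x; apply/AP => j; rewrite /lo ffunE inordK; last exact: vN.
  have /andP[h1 h2] := truncn_itv (v0 j x).
  have := hv j x; rewrite -natr1 in h2.
  move: h1 h2; set t := (Num.trunc (v j x))%:R; set vv := v j x => h1 h2 h3.
  apply/andP; split; nra.
have keyU : forall c x, A c x -> c = key x.
  move=> c x /AP H; apply/ffunP => j; apply/val_inj; rewrite ffunE /= inordK;
    last exact: vN.
  apply/esym/eqP; rewrite truncn_eq; last exact: v0.
  have /andP[h1 h2] := H j; have := hv j x; rewrite -natr1; rewrite /lo in h1 h2.
  move: h1 h2; set t := (c j)%:R; set vv := v j x => h1 h2 h3.
  apply/andP; split; nra.
have indsum : forall x (phi : K -> R), \sum_(c : K) \1_(A c) x * phi c = phi (key x).
  move=> x phi; rewrite (bigD1 (key x)) //= big1 ?addr0.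
    by rewrite indicE mem_set ?mul1r //; exact: keyP.
  move=> c hc; rewrite indicE memNset ?mul0r //.
  by move=> /keyU hk; move: hc; rewrite hk eqxx.
have [sp hsp] : {sp : K -> T & forall c, (exists y, A c y) -> A c (sp c)}.
  apply: (@choice _ _ (fun c s => (exists y, A c y) -> A c s)) => c; case: (pselect (exists y, A c y)) => [[y hy]|hn].
    by exists y.
  by exists pt.
pose w (c : K) := \int[m]_x \1_(A c) x.
exists K, w, sp; split.
- move=> c; apply: Rintegral_ge0 => x _; rewrite indicE.
  by case: (_ \in _).
- rewrite /w -Rintegral_sum; last by move=> c; exact: bm_indic.
  rewrite (@eq_Rintegral _ _ _ _ _ (fun _ => 1)); last first.
    move=> x _; have := indsum x (fun _ => 1).
    by under eq_bigr do rewrite mulr1.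
  rewrite Rintegral_cst // mul1r.
  by apply: (@eq_trans _ _ (fine 1%E)); [congr fine; exact: probability_setT|].
move=> j.
have hH : forall x, `|\sum_(c : K) \1_(A c) x * F j (sp c) - F j x| <= del.
  move=> x; rewrite indsum.
  have hx := keyP x; have hs := hsp _ (ex_intro _ x hx).
  move/AP: hx => /(_ j) /andP [h1 h2]; move/AP: hs => /(_ j) /andP [h3 h4].
  rewrite ler_norml; apply/andP; split; lra.
have bmH : bm (fun x => \sum_(c : K) \1_(A c) x * F j (sp c)).
  by apply: bm_sum => c; apply: bmM; [exact: bm_indic | exact: bm_cst].
have -> : \sum_(c : K) w c * F j (sp c) =
          \int[m]_x (\sum_(c : K) \1_(A c) x * F j (sp c)).
  rewrite Rintegral_sum; last first.
    by move=> c; apply: bmM; [exact: bm_indic | exact: bm_cst].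
  apply: eq_bigr => c _; rewrite /w RintegralZr //.
  exact/bm_int/bm_indic.
rewrite -RintegralB //; [|exact: bm_int | exact: bm_int (hF j)].
apply: (le_trans (le_normr_Rintegral _ _)) => //; first exact/bm_int/bmB.
apply: (@le_trans _ _ (\int[m]_x del)).
  apply: le_Rintegral; [by [] | exact/bm_int/bm_norm/bmB | exact/bm_int/bm_cst |].
  by move=> x _; exact: hH.
rewrite Rintegral_cst //.
suff -> : fine (m setT) = 1 by rewrite mulr1.
by apply: (@eq_trans _ _ (fine 1%E)); [congr fine; exact: probability_setT|].
Qed.

End Helpers.

Theorem lemma3 (R : realType) (d : measure_display) (X : measurableType d)
  (S : ptopologicalType) (mul : S -> S -> S) (inv : S -> S) (e : S)
  (mu : probability (BorelT S) R) (T : S -> X -> X) (n : nat)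
  (V Gam : set ('I_n -> X -> R)) :
  compact_hausdorff_group mul inv e ->
  haar_probability mul mu ->
  measurable_group_action mul e T ->
  (0 < n)%N ->
  linear_subspace V ->
  Gam `<=` V ->
  is_convex Gam ->
  MX_closed V Gam ->
  (forall g, V g -> V (S_Sigma mu T g)) ->
  (forall g (s : S), Gam g -> Gam (fun i x => g i (T s x))) ->
  forall g, Gam g -> Gam (S_Sigma mu T g).
Proof.
move=> _ _ [Tm _ _] _ [VMb _ _] GV hconv hclosed hSV hGT g hg.
case: (pselect (Gam (S_Sigma mu T g))) => // hng; exfalso.
have hVS : V (S_Sigma mu T g) := hSV g (GV g hg).
have [k [nus [eps [eps0 hnb]]]] := hclosed _ hVS hng.
have hgb : forall i, bm (g i).
  by move=> i; have [mg bd] := VMb g (GV g hg) i; split.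
pose f (i : 'I_n) (p : (BorelT S * X)%type) : R := g i (T p.1 p.2).
have bmf : forall i, bm (f i).
  move=> i; have [mg [Mi hMi]] := hgb i; split; last by exists Mi => x; exact: hMi.
  exact: measurableT_comp mg Tm.
have bmTs : forall i (s : BorelT S), bm (fun x => g i (T s x)).
  move=> i s; have [mfi [Mi hMi]] := bmf i; split; last by exists Mi => x; exact: (hMi (s, x)).
  exact: (measurable_fun_pair2 s mfi).
pose Fn (j : 'I_k) (s : BorelT S) : R := tau (nus j) (fun i x => g i (T s x)).
have bmFn : forall j, bm (Fn j).
  move=> j; apply: bm_sum => i; apply: bmB.
  - exact: (bm_partial mu (nus j i).1 (f i) (bmf i)).
  - exact: (bm_partial mu (nus j i).2 (f i) (bmf i)).
have claimA : forall j, tau (nus j) (S_Sigma mu T g) = \int[mu]_s Fn j s.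
  move=> j; rewrite /Fn /tau.
  rewrite Rintegral_sum; last first.
    move=> i; apply: bmB.
    - exact: (bm_partial mu (nus j i).1 (f i) (bmf i)).
    - exact: (bm_partial mu (nus j i).2 (f i) (bmf i)).
  apply: eq_bigr => i _.
  have E1 := fubiniR mu (nus j i).1 (f i) (bmf i).
  have E2 := fubiniR mu (nus j i).2 (f i) (bmf i).
  rewrite RintegralB //; last 2 first.
  - exact/bm_int/(bm_partial mu (nus j i).1 (f i) (bmf i)).
  - exact/bm_int/(bm_partial mu (nus j i).2 (f i) (bmf i)).
  by rewrite /S_Sigma /f /= in E1 E2 *; rewrite E1 E2.
have del0 : 0 < eps / 2 by apply: divr_gt0.
have [K [w [sp [w0 w1 happ]]]] := approx mu (point : S) k Fn (eps / 2) del0 bmFn.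
pose h := fun i x => \sum_(c : K) w c * g i (T (sp c) x).
have hGh : Gam h.
  exact: (conv_seq Gam K (index_enum K) w (fun c i x => g i (T (sp c) x)) hconv w0 w1
           (fun c => hGT g (sp c) hg)).
have claimD : forall j, tau (nus j) h = \sum_(c : K) w c * Fn j (sp c).
  move=> j; rewrite /h /Fn /tau.
  under [RHS]eq_bigr do rewrite mulr_sumr.
  rewrite exchange_big /=.
  apply: eq_bigr => i _.
  rewrite !Rintegral_sum; last 2 first.
  - by move=> c; apply: bmZ; exact: bmTs.
  - by move=> c; apply: bmZ; exact: bmTs.
  rewrite -sumrB; apply: eq_bigr => c _.
  rewrite !RintegralZl // -?mulrBr //; exact/bm_int/bmTs.
apply: (hnb h (GV _ hGh) _ hGh) => j.
rewrite claimD claimA; apply: (le_lt_trans (happ j)).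
lra.
Qed.
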